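(* Let $K>0$ and let $A,P,B,Q$ be points of $\mathbb S^3_K$ with $A\neq P$, $B\neq Q$. Let $M_1$ and $M_2$ be the midpoints of the shortests $AP$ and $BQ$, respectively. Then $\operatorname{cosq}_K(\overrightarrow{AP},\overrightarrow{BQ})=\operatorname{cosq}_K(\overrightarrow{AM_1},\overrightarrow{BM_2})$.
   Context: For $K>0$, $\mathbb S^3_K$ is the open hemisphere of radius $1/\sqrt K$ of the round 3-sphere with its intrinsic metric $\rho$ (all distances are $<\pi/\sqrt K$ and shortests are unique). Let $\kappa=\sqrt K$. For $A\neq P$, $B\neq Q$ put $x=\rho(A,P)$, $y=\rho(B,Q)$, $a=\rho(A,B)$, $b=\rho(P,Q)$, $d=\rho(P,B)$, $f=\rho(A,Q)$ and $$\operatorname{cosq}_K(\overrightarrow{AP},\overrightarrow{BQ})=\frac{\cos\kappa b+\cos\kappa x\cos\kappa y}{\sin\kappa x\sin\kappa y}-\frac{(\cos\kappa x+\cos\kappa d)(\cos\kappa y+\cos\kappa f)}{(1+\cos\kappa a)\sin\kappa x\sin\kappa y}.$$ *)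

(* Defs.v *)
From Stdlib Require Import Reals Lra.
Open Scope R_scope.

Definition pt : Type := (R * R * R * R)%type.

Definition dot (x y : pt) : R :=
  let '(x1, x2, x3, x4) := x in
  let '(y1, y2, y3, y4) := y in
  x1 * y1 + x2 * y2 + x3 * y3 + x4 * y4.

(* The open hemisphere S^3_K of the round 3-sphere of radius 1/sqrt K in R^4
   (centered at the origin), taken as the hemisphere with last coordinate > 0. *)
Definition inS3 (K : R) (x : pt) : Prop :=
  K * dot x x = 1 /\ 0 < snd x.

Definition rho (K : R) (x y : pt) : R :=
  acos (K * dot x y) / sqrt K.

(* M is the midpoint of the shortest AP: a point of S^3_K at distance
   rho(A,P)/2 from both A and P (in this uniquely geodesic space this is the
   midpoint of the unique shortest joining A and P). *)
Definition is_midpoint (K : R) (A P M : pt) : Prop :=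
  inS3 K M /\ rho K A M = rho K A P / 2 /\ rho K M P = rho K A P / 2.

Definition cosq (K : R) (A P B Q : pt) : R :=
  let k := sqrt K in
  let x := rho K A P in
  let y := rho K B Q in
  let a := rho K A B in
  let b := rho K P Q in
  let d := rho K P B in
  let f := rho K A Q in
  (cos (k * b) + cos (k * x) * cos (k * y)) / (sin (k * x) * sin (k * y))
  - ((cos (k * x) + cos (k * d)) * (cos (k * y) + cos (k * f)))
    / ((1 + cos (k * a)) * sin (k * x) * sin (k * y)).

(* Main.v *)
Require Import Defs.
From Stdlib Require Import Reals Lra Psatz Classical.
Open Scope R_scope.

Lemma dot_comm (X Y : pt) : dot X Y = dot Y X.
Proof. destruct X as [[[x1 x2] x3] x4]; destruct Y as [[[y1 y2] y3] y4]; unfold dot; ring. Qed.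

Lemma sq4 a b c d : a^2+b^2+c^2+d^2 = 0 -> a = 0 /\ b = 0 /\ c = 0 /\ d = 0.
Proof.
  intro H. pose proof (pow2_ge_0 a); pose proof (pow2_ge_0 b); pose proof (pow2_ge_0 c); pose proof (pow2_ge_0 d).
  repeat split; (apply NNPP; intro Hn; apply (pow_nonzero _ 2) in Hn; lra).
Qed.

Lemma dot_facts K (X Y : pt) : 0 < K -> inS3 K X -> inS3 K Y ->
  -1 < K * dot X Y <= 1 /\ (K * dot X Y = 1 -> X = Y).
Proof.
  destruct X as [[[x1 x2] x3] x4]; destruct Y as [[[y1 y2] y3] y4].
  unfold inS3, dot; simpl; intros HK [HX hx] [HY hy].
  assert (E1 : 2 - 2 * (K * (x1*y1+x2*y2+x3*y3+x4*y4)) =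
     K*((x1-y1)^2+(x2-y2)^2+(x3-y3)^2+(x4-y4)^2)) by (assert (K*((x1-y1)^2+(x2-y2)^2+(x3-y3)^2+(x4-y4)^2) = K * (x1 * x1 + x2 * x2 + x3 * x3 + x4 * x4) + K * (y1 * y1 + y2 * y2 + y3 * y3 + y4 * y4) - 2 * (K * (x1*y1+x2*y2+x3*y3+x4*y4))) by ring; lra).
  assert (E2 : 2 + 2 * (K * (x1*y1+x2*y2+x3*y3+x4*y4)) =
     K*((x1+y1)^2+(x2+y2)^2+(x3+y3)^2+(x4+y4)^2)) by (assert (K*((x1+y1)^2+(x2+y2)^2+(x3+y3)^2+(x4+y4)^2) = K * (x1 * x1 + x2 * x2 + x3 * x3 + x4 * x4) + K * (y1 * y1 + y2 * y2 + y3 * y3 + y4 * y4) + 2 * (K * (x1*y1+x2*y2+x3*y3+x4*y4))) by ring; lra).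
  assert (S1 : 0 <= (x1-y1)^2+(x2-y2)^2+(x3-y3)^2+(x4-y4)^2)
    by (pose proof (pow2_ge_0 (x1-y1)); pose proof (pow2_ge_0 (x2-y2)); pose proof (pow2_ge_0 (x3-y3)); pose proof (pow2_ge_0 (x4-y4)); lra).
  assert (S2 : 0 < (x1+y1)^2+(x2+y2)^2+(x3+y3)^2+(x4+y4)^2)
    by (pose proof (pow2_ge_0 (x1+y1)); pose proof (pow2_ge_0 (x2+y2)); pose proof (pow2_ge_0 (x3+y3)); assert (0 < (x4+y4)^2) by (apply pow_lt; lra); lra).
  assert (P2 : 0 < K*((x1+y1)^2+(x2+y2)^2+(x3+y3)^2+(x4+y4)^2)) by (apply Rmult_lt_0_compat; lra).
  assert (P1 : 0 <= K*((x1-y1)^2+(x2-y2)^2+(x3-y3)^2+(x4-y4)^2)) by (apply Rmult_le_pos; lra).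
  split; [lra|].
  intro H1.
  assert (Z : K*((x1-y1)^2+(x2-y2)^2+(x3-y3)^2+(x4-y4)^2) = 0) by lra.
  apply Rmult_integral in Z; destruct Z as [Z|Z]; [lra|].
  apply sq4 in Z; destruct Z as [? [? [? ?]]].
  assert (x1 = y1) by lra. assert (x2 = y2) by lra. assert (x3 = y3) by lra. assert (x4 = y4) by lra.
  subst; reflexivity.
Qed.

Lemma cos_rho K X Y : 0 < K -> inS3 K X -> inS3 K Y ->
  cos (sqrt K * rho K X Y) = K * dot X Y /\
  sin (sqrt K * rho K X Y) = sqrt (1 - (K * dot X Y)²).
Proof.
  intros HK HX HY. destruct (dot_facts K X Y HK HX HY) as [[b1 b2] _].
  assert (sqrt K <> 0) by (apply Rgt_not_eq, sqrt_lt_R0; lra).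
  unfold rho. replace (sqrt K * (acos (K * dot X Y) / sqrt K)) with (acos (K * dot X Y)) by (field; auto).
  split; [apply cos_acos | apply sin_acos]; lra.
Qed.

Lemma mid_dot K (A P M Z : pt) c : 0 < K -> inS3 K A -> inS3 K P -> inS3 K M ->
  K * dot A M = c -> K * dot M P = c -> 2*c*c - 1 = K * dot A P -> 0 < c ->
  2 * c * (K * dot M Z) = K * dot A Z + K * dot P Z.
Proof.
  destruct A as [[[a1 a2] a3] a4]; destruct P as [[[p1 p2] p3] p4];
  destruct M as [[[m1 m2] m3] m4]; destruct Z as [[[z1 z2] z3] z4].
  unfold inS3, dot; simpl; intros HK [HA _] [HP _] [HM _] H1 H2 H3 Hc.
  set (e1 := 2*c*m1 - a1 - p1). set (e2 := 2*c*m2 - a2 - p2).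
  set (e3 := 2*c*m3 - a3 - p3). set (e4 := 2*c*m4 - a4 - p4).
  assert (E : K*(e1^2+e2^2+e3^2+e4^2) = 4*c*c*(K*(m1*m1+m2*m2+m3*m3+m4*m4))
     - 4*c*(K*(a1*m1+a2*m2+a3*m3+a4*m4)) - 4*c*(K*(m1*p1+m2*p2+m3*p3+m4*p4))
     + K*(a1*a1+a2*a2+a3*a3+a4*a4) + K*(p1*p1+p2*p2+p3*p3+p4*p4)
     + 2*(K*(a1*p1+a2*p2+a3*p3+a4*p4))) by (unfold e1, e2, e3, e4; ring).
  rewrite HM, H1, H2, HA, HP, <- H3 in E.
  assert (Z : K*(e1^2+e2^2+e3^2+e4^2) = 0) by lra.
  apply Rmult_integral in Z; destruct Z as [Z|Z]; [lra|].
  apply sq4 in Z; destruct Z as [H [H0 [H4 H5]]].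
  assert (F : 2 * c * (K * (m1 * z1 + m2 * z2 + m3 * z3 + m4 * z4)) -
     (K * (a1 * z1 + a2 * z2 + a3 * z3 + a4 * z4) + K * (p1 * z1 + p2 * z2 + p3 * z3 + p4 * z4))
     = K * (e1*z1 + e2*z2 + e3*z3 + e4*z4)) by (unfold e1, e2, e3, e4; ring).
  assert (F2: K * (e1*z1 + e2*z2 + e3*z3 + e4*z4) = 0) by (rewrite H, H0, H4, H5; ring).
  lra.
Qed.

Lemma mid_c K (A P M : pt) : 0 < K -> inS3 K A -> inS3 K P -> A <> P ->
  is_midpoint K A P M ->
  let c := K * dot A M in
  K * dot M P = c /\ 2*c*c - 1 = K * dot A P /\ 0 < c /\ c * c < 1.
Proof.
  intros HK HA HP HAP [HM [H1 H2]] c.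
  destruct (dot_facts K A P HK HA HP) as [[b1 b2] b3].
  assert (X1 : K * dot A P < 1) by (destruct b2 as [b2|b2]; [exact b2| exfalso; auto]).
  assert (sK : sqrt K <> 0) by (apply Rgt_not_eq, sqrt_lt_R0; lra).
  unfold rho in H1, H2.
  assert (G1 : acos (K * dot A M) = acos (K * dot A P) / 2).
  { apply (Rmult_eq_reg_r (/ sqrt K)); [|apply Rinv_neq_0_compat; auto].
    unfold Rdiv in *; rewrite H1; field; auto. }
  assert (G2 : acos (K * dot M P) = acos (K * dot A P) / 2).
  { apply (Rmult_eq_reg_r (/ sqrt K)); [|apply Rinv_neq_0_compat; auto].
    unfold Rdiv in *; rewrite H2; field; auto. }
  destruct (dot_facts K A M HK HA HM) as [[d1 d2] _].
  destruct (dot_facts K M P HK HM HP) as [[e1 e2] _].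
  assert (C1 : cos (acos (K * dot A M)) = c) by (unfold c; apply cos_acos; lra).
  assert (C2 : cos (acos (K * dot M P)) = K * dot M P) by (apply cos_acos; lra).
  assert (Eq : K * dot M P = c) by (rewrite <- C1, <- C2, G1, G2; reflexivity).
  assert (D : 2*c*c - 1 = K * dot A P).
  { rewrite <- C1, G1, <- cos_2a_cos.
    replace (2 * (acos (K * dot A P) / 2)) with (acos (K * dot A P)) by field.
    apply cos_acos; lra. }
  assert (Cp : 0 <= c).
  { rewrite <- C1, G1. pose proof (acos_bound (K * dot A P)). pose proof PI_RGT_0.
    apply cos_ge_0; lra. }
  repeat split; auto; try nra.
Qed.

Lemma sin_rel X c s : 2*c*c - 1 = X -> 0 < c -> s = sqrt (1 - c²) ->
  sqrt (1 - X²) = 2 * c * s.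
Proof.
  intros H Hc Hs. subst. unfold Rsqr.
  assert (1 - (2*c*c-1)*(2*c*c-1) = (2*c)*(2*c)*(1 - c*c)) by ring.
  rewrite H. destruct (Rle_dec 0 (1 - c*c)) as [h|h].
  - rewrite sqrt_mult; [|nra|lra]. rewrite sqrt_square; lra.
  - rewrite (sqrt_neg_0 (1 - c*c)) by lra. rewrite sqrt_neg_0 by nra. ring.
Qed.

Theorem lemma3p2 (K : R) (A P B Q M1 M2 : pt) :
  0 < K ->
  inS3 K A -> inS3 K P -> inS3 K B -> inS3 K Q ->
  A <> P -> B <> Q ->
  is_midpoint K A P M1 -> is_midpoint K B Q M2 ->
  cosq K A P B Q = cosq K A M1 B M2.
Proof.
  intros HK HA HP HB HQ HAP HBQ HM1 HM2.
  pose proof HM1 as [HM1' _]. pose proof HM2 as [HM2' _].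
  destruct (mid_c K A P M1 HK HA HP HAP HM1) as [m1P [D1 [c1p c1l]]].
  destruct (mid_c K B Q M2 HK HB HQ HBQ HM2) as [m2Q [D2 [c2p c2l]]].
  set (c1 := K * dot A M1) in *. set (c2 := K * dot B M2) in *.
  unfold cosq.
  destruct (cos_rho K A P HK HA HP) as [-> ->].
  destruct (cos_rho K B Q HK HB HQ) as [-> ->].
  destruct (cos_rho K A B HK HA HB) as [-> _].
  destruct (cos_rho K P Q HK HP HQ) as [-> _].
  destruct (cos_rho K P B HK HP HB) as [-> _].
  destruct (cos_rho K A Q HK HA HQ) as [-> _].
  destruct (cos_rho K A M1 HK HA HM1') as [-> ->].
  destruct (cos_rho K B M2 HK HB HM2') as [-> ->].
  destruct (cos_rho K M1 M2 HK HM1' HM2') as [-> _].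
  destruct (cos_rho K M1 B HK HM1' HB) as [-> _].
  destruct (cos_rho K A M2 HK HA HM2') as [-> _].
  fold c1 c2.
  assert (E1 := mid_dot K A P M1 M2 c1 HK HA HP HM1' eq_refl m1P D1 c1p).
  assert (E2 := mid_dot K A P M1 B c1 HK HA HP HM1' eq_refl m1P D1 c1p).
  assert (E3 := mid_dot K B Q M2 A c2 HK HB HQ HM2' eq_refl m2Q D2 c2p).
  assert (E4 := mid_dot K B Q M2 M1 c2 HK HB HQ HM2' eq_refl m2Q D2 c2p).
  assert (E5 := mid_dot K B Q M2 P c2 HK HB HQ HM2' eq_refl m2Q D2 c2p).
  rewrite (dot_comm M2 A) in E3. rewrite (dot_comm M2 M1) in E4.
  rewrite (dot_comm M2 P) in E5. rewrite (dot_comm B A), (dot_comm Q A) in E3.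
  rewrite (dot_comm B M1), (dot_comm Q M1) in E4.
  rewrite (dot_comm B P), (dot_comm Q P) in E5.
  assert (E6 := mid_dot K A P M1 Q c1 HK HA HP HM1' eq_refl m1P D1 c1p).
  set (s1 := sqrt (1 - c1²)). set (s2 := sqrt (1 - c2²)).
  assert (s1p : 0 < s1) by (apply sqrt_lt_R0; unfold Rsqr; lra).
  assert (s2p : 0 < s2) by (apply sqrt_lt_R0; unfold Rsqr; lra).
  rewrite (sin_rel _ c1 s1 D1 c1p eq_refl), (sin_rel _ c2 s2 D2 c2p eq_refl).
  destruct (dot_facts K A B HK HA HB) as [[ab _] _].
  assert (Hm12 : K * dot M1 M2 = (K*dot A B + K*dot A Q + K*dot P B + K*dot P Q)/(4*c1*c2)).
  { apply (Rmult_eq_reg_l (2*c2)); [|lra]. rewrite E4.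
    apply (Rmult_eq_reg_l (2*c1)); [|lra].
    replace (2 * c1 * (K * dot M1 B + K * dot M1 Q)) with
      (2 * c1 * (K * dot M1 B) + 2 * c1 * (K * dot M1 Q)) by ring.
    rewrite E2, E6. field; lra. }
  assert (Hm1b : K * dot M1 B = (K*dot A B + K*dot P B)/(2*c1)).
  { apply (Rmult_eq_reg_l (2*c1)); [|lra]. rewrite E2. field; lra. }
  assert (Ham2 : K * dot A M2 = (K*dot A B + K*dot A Q)/(2*c2)).
  { apply (Rmult_eq_reg_l (2*c2)); [|lra]. rewrite E3. field; lra. }
  rewrite Hm12, Hm1b, Ham2.
  assert (XX : K * dot A P = 2*c1*c1-1) by lra.
  assert (YY : K * dot B Q = 2*c2*c2-1) by lra.
  rewrite XX, YY.
  field. repeat split; lra.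
Qed.
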